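(* There is a universal constant $C$ such that the following holds. Let $G=(V,E,m,w)$ be a weighted graph with an intrinsic metric $\rho$ such that all balls $B_R(x)$ are finite and the jump size $s=\sup_{x\sim y}\rho(x,y)$ is finite, and fix $x_0\in V$. For any ancient solution $u$ of $D_t u=\Delta u$ on $V\times\mathbb{Z}_-$ and any $R\in\mathbb{N}$ with $R\ge s$, $$R^2\sum_{\widetilde{Q}_R}\Gamma(u)+R^4\sum_{\widetilde{Q}_R}(D_t u)^2\le C\sum_{\widetilde{Q}_{9R}}u^2.$$
   Context: A weighted graph $G=(V,E,m,w)$ consists of a locally finite, simple, undirected, connected graph $(V,E)$, a symmetric edge weight $w:E\to(0,\infty)$ (extended by $w_{xy}=0$ if $x\not\sim y$), and a vertex weight $m:V\to(0,\infty)$. The Laplacian is $\Delta f(x)=\sum_{y\sim x}\frac{w_{xy}}{m_x}(f(y)-f(x))$. A (pseudo)metric $\rho$ on $V$ is intrinsic if $\sum_{y\sim x}w_{xy}\rho^2(x,y)\le m_x$ for all $x$; $B_R(x)=\{y:\rho(y,x)\le R\}$, $B_R:=B_R(x_0)$. $\mathbb{Z}_-=\mathbb{Z}\cap(-\infty,0]$; $D_t u(x,t)=u(x,t)-u(x,t-1)$; an ancient solution is $u:V\times\mathbb{Z}_-\to\mathbb{R}$ with $D_tu=\Delta u$ for all $(x,t)$. $\Gamma(f)(x)=\frac12\sum_{y}\frac{w_{xy}}{m_x}(f(y)-f(x))^2$, applied to $u(\cdot,t)$. $\widetilde{Q}_R=B_R\times([-R^2,0]\cap\mathbb{Z})$ and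 $\sum_{\widetilde{Q}_R}F:=\sum_{t=-R^2}^0\sum_{x\in B_R}F(x,t)m_x$. *)

(* Defs.v *)
From Stdlib Require Import Relation_Operators.
From mathcomp Require Import all_boot all_order all_algebra.
From mathcomp Require Import all_classical all_reals.
Set Implicit Arguments.
Unset Strict Implicit.
Unset Printing Implicit Defensive.
Import Order.TTheory GRing.Theory Num.Theory.
Local Open Scope classical_set_scope.
Local Open Scope ring_scope.

Section Defs.
Variables (R : realType) (V : choiceType).

(* x ~ y  iff  w x y > 0 (w is extended by 0 off the edge set) *)
Definition adjacent (w : V -> V -> R) (x y : V) : Prop := 0 < w x y.

Definition nbrs (w : V -> V -> R) (x : V) : set V := [set y | adjacent w x y].

Definition weighted_graph (m : V -> R) (w : V -> V -> R) : Prop :=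
  (forall x y, w x y = w y x) /\
  (forall x y, 0 <= w x y) /\
  (forall x, w x x = 0) /\
  (forall x, finite_set (nbrs w x)) /\
  (forall x, 0 < m x) /\
  (forall x y, clos_refl_trans V (adjacent w) x y).

Definition laplacian (m : V -> R) (w : V -> V -> R) (f : V -> R) (x : V) : R :=
  \sum_(y \in nbrs w x) (w x y / m x * (f y - f x)).

Definition Gamma (m : V -> R) (w : V -> V -> R) (f : V -> R) (x : V) : R :=
  2^-1 * \sum_(y \in nbrs w x) (w x y / m x * (f y - f x) ^+ 2).

Definition pseudometric (rho : V -> V -> R) : Prop :=
  [/\ (forall x, rho x x = 0),
      (forall x y, 0 <= rho x y),
      (forall x y, rho x y = rho y x) &
      (forall x y z, rho x z <= rho x y + rho y z)].

Definition intrinsic (m : V -> R) (w : V -> V -> R) (rho : V -> V -> R) : Prop :=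
  forall x, \sum_(y \in nbrs w x) (w x y * rho x y ^+ 2) <= m x.

Definition ball (rho : V -> V -> R) (x : V) (r : R) : set V :=
  [set y | rho y x <= r].

Definition jumps (w : V -> V -> R) (rho : V -> V -> R) : set R :=
  [set d | exists x y, adjacent w x y /\ d = rho x y].

Definition jump_size (w : V -> V -> R) (rho : V -> V -> R) : R :=
  sup (jumps w rho).

(* time derivative D_t u(x,t) = u(x,t) - u(x,t-1); times are integers,
   only t <= 0 is relevant *)
Definition Dt (u : V -> int -> R) (x : V) (t : int) : R := u x t - u x (t - 1).

Definition ancient (m : V -> R) (w : V -> V -> R) (u : V -> int -> R) : Prop :=
  forall x (t : int), (t <= 0)%R -> Dt u x t = laplacian m w (fun y => u y t) x.

(* sum over tilde Q_r = B_r(x0) x ([-r^2, 0] cap Z), weighted by m *)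
Definition sumQ (m : V -> R) (rho : V -> V -> R) (x0 : V) (r : nat)
    (F : V -> int -> R) : R :=
  \sum_(k < (r ^ 2).+1)
     \sum_(x \in ball rho x0 r%:R) (F x (- (k%:Z))%R * m x).

End Defs.

(* Main.v *)
Require Import Defs.
From mathcomp Require Import all_boot all_order all_algebra.
From mathcomp Require Import all_classical all_reals.
From mathcomp Require Import finmap ring lra.
Import Order.TTheory GRing.Theory Num.Theory.
Local Open Scope classical_set_scope.
Local Open Scope ring_scope.
Lemma pw1 (R : realFieldType) (p q a b : R) :
  (p^+2 + q^+2) * (b - a)^+2 / 4 <= (q^+2 * b - p^+2 * a) * (b - a) + 2 * (q - p)^+2 * (a^+2 + b^+2).
Proof.
have e : (q^+2 * b - p^+2 * a) * (b - a) = (p^+2+q^+2)/2 * (b-a)^+2 + (q+p)*(b-a)*((q-p)*(a+b))/2.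
  by rewrite /=; field.
rewrite e.
set X := (q+p)*(b-a). set Y := (q-p)*(a+b).
have h1 : - (X * Y)/2 <= X^+2/16 + Y^+2 by have := sqr_ge0 (X/4 + Y); nra.
have h2 : X^+2 <= 2 * (p^+2+q^+2)*(b-a)^+2 by rewrite /X; have := mulr_ge0 (sqr_ge0 (q-p)) (sqr_ge0 (b-a)); nra.
have h3 : Y^+2 <= 2 * (q-p)^+2 * (a^+2+b^+2) by rewrite /Y; have := mulr_ge0 (sqr_ge0 (q-p)) (sqr_ge0 (a-b)); nra.
nra.
Qed.

Lemma pw2 (R : realFieldType) (p q vx vy g g' c : R) : 0 <= p -> 0 <= q -> 0 < c ->
  vy - vx = g - g' ->
  - ((q^+2 * vy - p^+2 * vx) * g) <=
  - (p*q*(g^+2 - g'^+2))/2 + c/2 * (q-p)^+2 * (q^+2*vy^+2 + p^+2*vx^+2) + g^+2 / c.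
Proof.
move=> p0 q0 c0 e.
have d : q^+2 * vy - p^+2 * vx = p*q*(vy-vx) + (q-p)*(q*vy+p*vx) by ring.
rewrite d e.
set Y := q*vy+p*vx.
have h1 : - (p*q*(g-g')*g) <= - (p*q*(g^+2 - g'^+2))/2.
  have : 0 <= p*q*(g-g')^+2 by apply: mulr_ge0; [exact: mulr_ge0|exact: sqr_ge0].
  nra.
have h2 : - ((q-p)*Y*g) <= c/4*(q-p)^+2*Y^+2 + g^+2/c.
  set Z := (q-p)*Y.
  have hz : 0 <= (c*Z/2 + g)^+2 / c by apply: divr_ge0; [exact: sqr_ge0|lra].
  have e2 : (c*Z/2 + g)^+2 / c = c/4*Z^+2 + Z*g + g^+2/c.
    field; lra.
  rewrite e2 in hz.
  have e3 : c / 4 * (q - p) ^+ 2 * Y ^+ 2 = c/4 * Z^+2 by rewrite /Z; ring.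
  rewrite e3; lra.
have h3 : Y^+2 <= 2*(q^+2*vy^+2 + p^+2*vx^+2) by rewrite /Y; have := sqr_ge0 (q*vy-p*vx); nra.
have h4 : 0 <= (q-p)^+2 by exact: sqr_ge0.
have h5 : 0 <= c/4 * (q-p)^+2 by apply: mulr_ge0 => //; lra.
have h6 := ler_wpM2l h5 h3.
have e4 : (p * q * (g - g') + (q - p) * Y) * g = p*q*(g-g')*g + (q-p)*Y*g by ring.
rewrite e4. nra.
Qed.
Section Main.
Variables (R : realType) (V : choiceType) (m : V -> R) (w : V -> V -> R)
  (rho : V -> V -> R) (x0 : V) (u : V -> int -> R) (r : nat).
Hypotheses (Hg : weighted_graph m w) (Hp : pseudometric rho)
  (Hi : intrinsic m w rho)
  (Hfin : forall (x : V) (s : R), finite_set (ball rho x s))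
  (Hub : has_ubound (jumps w rho)) (Ha : ancient m w u)
  (Hj : jump_size w rho <= r%:R) (r0 : (0 < r)%N).

Let rr : R := r%:R.
Lemma rr_gt0 : 0 < rr. Proof. by rewrite /rr ltr0n. Qed.

Lemma w_sym x y : w x y = w y x. Proof. by case: Hg. Qed.
Lemma w_ge0 x y : 0 <= w x y. Proof. by case: Hg => _ []. Qed.
Lemma m_gt0 x : 0 < m x. Proof. by case: Hg => _ [_ [_ [_ []]]]. Qed.
Lemma w_off x y : ~ (0 < w x y) -> w x y = 0.
Proof.
move=> h; apply/eqP; rewrite eq_le w_ge0 andbT leNgt; by apply/negP.
Qed.
Lemma adj_rho x y : 0 < w x y -> rho x y <= rr.
Proof.
move=> h; apply: le_trans Hj; apply: ub_le_sup => //; by exists x, y.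
Qed.
Lemma rho_tri x y z : rho x z <= rho x y + rho y z. Proof. by case: Hp. Qed.
Lemma rho_sym x y : rho x y = rho y x. Proof. by case: Hp. Qed.
Lemma rho_ge0 x y : 0 <= rho x y. Proof. by case: Hp. Qed.

Lemma rho_near x y : 0 < w x y -> rho y x0 <= rho x x0 + rr /\ rho x x0 <= rho y x0 + rr.
Proof.
move=> h; have := adj_rho x y h; have := rho_tri y x x0; have := rho_tri x y x0.
rewrite (rho_sym y x); lra.
Qed.

Definition S := fset_set (ball rho x0 (9 * r)%:R).
Lemma memS (x : V) : x \in S <-> rho x x0 <= 9 * rr.
Proof. by rewrite /S in_fset_set // in_setE /ball /= natrM. Qed.
Lemma S_uniq : uniq S. Proof. exact: fset_uniq. Qed.

Definition good (x : V) := rho x x0 <= 8 * rr.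

Lemma nbr_S (x y : V) : good x -> 0 < w x y -> y \in S.
Proof. move=> gx h; apply/memS; have [h1 h2] := rho_near x y h; move: gx; rewrite /good; lra. Qed.

Lemma lapS f x : good x ->
  m x * laplacian m w f x = \sum_(y <- S) w x y * (f y - f x).
Proof.
move=> gx; rewrite /laplacian (fsbig_fwiden S).
- rewrite mulr_sumr; apply: eq_bigr => y _; field.
  exact: lt0r_neq0 (m_gt0 x).
- move=> y ny; exact: (nbr_S x y gx ny).
- exact: S_uniq.
- by move=> y [/= yS ny]; rewrite /= w_off // !mul0r.
Qed.

Lemma GammaS f x : good x ->
  Gamma m w f x * m x = 2^-1 * \sum_(y <- S) w x y * (f y - f x) ^+ 2.
Proof.
move=> gx; rewrite /Gamma (fsbig_fwiden S).
- rewrite -mulrA mulr_suml; congr (_ * _); apply: eq_bigr => y _; field.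
  exact: lt0r_neq0 (m_gt0 x).
- move=> y ny; exact: (nbr_S x y gx ny).
- exact: S_uniq.
- by move=> y [/= yS ny]; rewrite /= w_off // !mul0r.
Qed.

Lemma IntrS x : good x -> \sum_(y <- S) w x y * rho x y ^+ 2 <= m x.
Proof.
move=> gx; have := Hi x; rewrite (fsbig_fwiden S) //.
- move=> y ny; exact: (nbr_S x y gx ny).
- by move=> y [/= yS ny]; rewrite /= w_off // !mul0r.
Qed.

Definition cl (t : R) : R := if t <= 0 then 0 else if t <= 1 then t else 1.
Lemma cl01 t : 0 <= cl t /\ cl t <= 1.
Proof. rewrite /cl; case: (lerP t 0) => h; [|case: (lerP t 1) => h2]; split; lra. Qed.
Lemma cl_mono t s : t <= s -> 0 <= cl s - cl t /\ cl s - cl t <= s - t.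
Proof.
move=> ts; rewrite /cl; case: (lerP s 0) => h1; case: (lerP t 0) => h2;
  case: (lerP s 1) => h3; case: (lerP t 1) => h4; split; lra.
Qed.
Lemma cl_lip s t : (cl s - cl t) ^+ 2 <= (s - t) ^+ 2.
Proof.
case: (lerP t s) => h.
  have [h1 h2] := cl_mono t s h; nra.
have [h1 h2] := cl_mono s t (ltW h); nra.
Qed.

Definition cut (b : R) x := cl ((b - rho x x0) / rr).
Lemma cut01 b x : 0 <= cut b x /\ cut b x <= 1. Proof. exact: cl01. Qed.
Lemma cut1 b x : rho x x0 <= b - rr -> cut b x = 1.
Proof.
move=> h; rewrite /cut /cl; have r0' := rr_gt0.
have h1 : 1 <= (b - rho x x0) / rr by rewrite ler_pdivlMr //; lra.
move: h1; set t := (b - rho x x0) / rr => h1.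
case: (lerP t 0) => h2; [lra|]; case: (lerP t 1) => h3; lra.
Qed.
Lemma cut0 b x : b <= rho x x0 -> cut b x = 0.
Proof.
move=> h; rewrite /cut /cl; have r0' := rr_gt0.
by rewrite ifT // pmulr_lle0 ?invr_gt0 //; lra.
Qed.
Lemma cut_lip b x y : (cut b y - cut b x) ^+ 2 <= rho x y ^+ 2 / rr ^+ 2.
Proof.
apply: le_trans (cl_lip _ _) _; have r0' := rr_gt0.
have -> : (b - rho y x0) / rr - (b - rho x x0) / rr = (rho x x0 - rho y x0) / rr.
  by field; lra.
rewrite expr_div_n ler_pM2r ?invr_gt0 ?exprn_gt0 //.
have := rho_tri x y x0; have := rho_tri y x x0; rewrite (rho_sym y x).
have := rho_ge0 x y; nra.
Qed.

Definition DD (F : V -> V -> R) := \sum_(x <- S) \sum_(y <- S) w x y * F x y.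

Lemma DD_ext F G : (forall x y, F x y = G x y) -> DD F = DD G.
Proof. move=> e; apply: eq_bigr => x _; apply: eq_bigr => y _; by rewrite e. Qed.
Lemma DD_sym F : DD F = DD (fun x y => F y x).
Proof.
rewrite /DD exchange_big /=; apply: eq_bigr => x _; apply: eq_bigr => y _.
by rewrite w_sym.
Qed.
Lemma DD_add F G : DD (fun x y => F x y + G x y) = DD F + DD G.
Proof.
rewrite /DD -big_split; apply: eq_bigr => x _; rewrite -big_split.
by apply: eq_bigr => y _ /=; rewrite mulrDr.
Qed.
Lemma DD_scal c F : DD (fun x y => c * F x y) = c * DD F.
Proof.
rewrite /DD mulr_sumr; apply: eq_bigr => x _; rewrite mulr_sumr.
by apply: eq_bigr => y _; ring.
Qed.
Lemma DD_le F G : (forall x y, x \in S -> y \in S -> w x y * F x y <= w x y * G x y) ->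
  DD F <= DD G.
Proof.
move=> h; rewrite /DD big_seq [X in _ <= X]big_seq; apply: ler_sum => x xS.
rewrite big_seq [X in _ <= X]big_seq; apply: ler_sum => y yS; exact: h.
Qed.
Lemma DD_row f F : DD (fun x y => f x * F x y) =
  \sum_(x <- S) f x * \sum_(y <- S) w x y * F x y.
Proof. apply: eq_bigr => x _; rewrite mulr_sumr; apply: eq_bigr => y _; ring. Qed.
Lemma DD_ge0 F : (forall x y, 0 <= F x y) -> 0 <= DD F.
Proof.
move=> h; apply: sumr_ge0 => x _; apply: sumr_ge0 => y _.
exact: mulr_ge0 (w_ge0 x y) (h x y).
Qed.

Lemma green h f : (forall x, ~ good x -> h x = 0) ->
  \sum_(x <- S) h x * (m x * laplacian m w f x) =
  - 2^-1 * DD (fun x y => (h y - h x) * (f y - f x)).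
Proof.
move=> hh.
have e1 : \sum_(x <- S) h x * (m x * laplacian m w f x) =
    DD (fun x y => h x * (f y - f x)).
  rewrite DD_row; apply: eq_bigr => x _.
  case: (pselect (good x)) => gx; first by rewrite lapS.
  by rewrite hh // !mul0r.
have e3 : DD (fun x y => h y * (f x - f y)) = DD (fun x y => h x * (f y - f x)).
  exact: (DD_sym (fun x y => h y * (f x - f y))).
have e2 : DD (fun x y => (h y - h x) * (f y - f x)) =
   - DD (fun x y => h x * (f y - f x)) - DD (fun x y => h x * (f y - f x)).
  rewrite (DD_ext _ (fun x y => (-1) * (h y * (f x - f y)) + (-1) * (h x * (f y - f x)))); last by move=> x y; ring.
  by rewrite DD_add !DD_scal e3; ring.
rewrite e1 e2; field; done.
Qed.

Lemma cut_bad b x : b <= 4 * rr -> ~ good x -> cut b x = 0.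
Proof.
move=> hb gx; apply: cut0; move/negP: gx; rewrite /good -ltNge => gx.
have := rr_gt0; lra.
Qed.
Lemma cut_bad_nb b x y : b <= 4 * rr -> ~ good x -> w x y * cut b y = 0.
Proof.
move=> hb gx; case: (pselect (0 < w x y)) => h; last by rewrite w_off // mul0r.
have [h1 h2] := rho_near x y h.
rewrite cut0 ?mulr0 //; move/negP: gx; rewrite /good -ltNge => gx.
have := rr_gt0; lra.
Qed.

Lemma lipsum b x : b <= 4 * rr ->
  \sum_(y <- S) w x y * (cut b y - cut b x) ^+ 2 <= m x / rr ^+ 2.
Proof.
move=> hb; have r0' := rr_gt0; have m0 := m_gt0 x.
case: (pselect (good x)) => gx.
  apply: le_trans (_ : \sum_(y <- S) w x y * (rho x y ^+ 2 / rr ^+ 2) <= _).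
    apply: ler_sum => y _; apply: ler_wpM2l; [exact: w_ge0|exact: cut_lip].
  under eq_bigr do rewrite mulrA.
  rewrite -mulr_suml; apply: ler_wpM2r; last exact: IntrS.
  by rewrite invr_ge0 exprn_ge0 // ltW.
rewrite big1; first by apply: divr_ge0; [exact: ltW|exact: exprn_ge0 (ltW r0')].
move=> y _; rewrite (cut_bad b x hb gx) subr0 expr2 mulrA (cut_bad_nb b x y hb gx).
by rewrite mul0r.
Qed.

Definition phi := cut (2 * rr).
Definition psi := cut (4 * rr).
Lemma phi_b : 2 * rr <= 4 * rr. Proof. have := rr_gt0; lra. Qed.
Lemma psi_b : 4 * rr <= 4 * rr. Proof. by []. Qed.

Lemma psi1 x : rho x x0 <= 3 * rr -> psi x = 1.
Proof. move=> h; apply: cut1; lra. Qed.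
Lemma phi1 x : rho x x0 <= rr -> phi x = 1.
Proof. move=> h; apply: cut1; lra. Qed.

Lemma phi_psi x y : phi x * phi y <= psi x ^+ 2.
Proof.
have [a1 a2] := cut01 (2 * rr) x; have [b1 b2] := cut01 (2 * rr) y.
case: (lerP (rho x x0) (3 * rr)) => h.
  rewrite psi1 // /phi; nra.
rewrite /phi cut0; last by have := rr_gt0; lra.
rewrite mul0r; exact: sqr_ge0.
Qed.

Lemma phi_psi_nb x y : 0 < w x y -> psi x != 1 -> phi x = 0 /\ phi y = 0.
Proof.
move=> h hp; have [h1 h2] := rho_near x y h; have r0' := rr_gt0.
case: (lerP (rho x x0) (3 * rr)) => hx; first by rewrite psi1 ?eqxx in hp.
by split; apply: cut0; lra.
Qed.

Lemma psi_bad x : ~ good x -> psi x = 0. Proof. exact: cut_bad psi_b. Qed.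
Lemma phi_bad x : ~ good x -> phi x = 0. Proof. exact: cut_bad phi_b. Qed.

Lemma DDcG (c : V -> R) f : (forall x, ~ good x -> c x = 0) ->
  DD (fun x y => c x * (f y - f x) ^+ 2) =
  2 * \sum_(x <- S) c x * (Gamma m w f x * m x).
Proof.
move=> hc; rewrite DD_row mulr_sumr; apply: eq_bigr => x _.
case: (pselect (good x)) => gx; first by rewrite GammaS //; field; done.
by rewrite hc // !mul0r mulr0.
Qed.

Lemma lipDD b (f : V -> R) : b <= 4 * rr -> (forall x, 0 <= f x) ->
  DD (fun x y => f x * (cut b y - cut b x) ^+ 2) <=
  rr ^- 2 * \sum_(x <- S) f x * m x.
Proof.
move=> hb hf; rewrite DD_row mulr_sumr; apply: ler_sum => x _.
apply: le_trans (_ : f x * (m x / rr ^+ 2) <= _).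
  by apply: ler_wpM2l => //; exact: lipsum.
by rewrite le_eqVlt; apply/orP; left; apply/eqP; ring.
Qed.

Lemma C1 (a a' : V -> R) : (forall x, good x -> a x - a' x = laplacian m w a x) ->
  \sum_(x <- S) psi x ^+ 2 * (Gamma m w a x * m x) <=
  \sum_(x <- S) psi x ^+ 2 * (a' x ^+ 2 - a x ^+ 2) * m x
  + 4 * (rr ^- 2 * \sum_(x <- S) a x ^+ 2 * m x).
Proof.
move=> hA.
set P := DD (fun x y => psi x ^+ 2 * (a y - a x) ^+ 2).
have eL : \sum_(x <- S) psi x ^+ 2 * (Gamma m w a x * m x) = 2^-1 * P.
  rewrite /P DDcG; first by field; done.
  by move=> x gx; rewrite psi_bad // expr0n.
have ineq : DD (fun x y => (psi x ^+ 2 + psi y ^+ 2) * (a y - a x) ^+ 2 / 4) <=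
   DD (fun x y => (psi y ^+ 2 * a y - psi x ^+ 2 * a x) * (a y - a x)
           + 2 * (psi y - psi x) ^+ 2 * (a x ^+ 2 + a y ^+ 2)).
  apply: DD_le => x y _ _; apply: ler_wpM2l; first exact: w_ge0.
  exact: pw1.
have eq1 : DD (fun x y => (psi x ^+ 2 + psi y ^+ 2) * (a y - a x) ^+ 2 / 4) = 2^-1 * P.
  rewrite (DD_ext _ (fun x y => 4^-1 * (psi x ^+ 2 * (a y - a x) ^+ 2)
                 + 4^-1 * (psi y ^+ 2 * (a y - a x) ^+ 2))); last by move=> x y; field; done.
  rewrite DD_add !DD_scal.
  have -> : DD (fun x y => psi y ^+ 2 * (a y - a x) ^+ 2) = P.
    rewrite DD_sym /P; apply: DD_ext => x y; ring.
  rewrite -/P; field; done.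
rewrite DD_add in ineq.
have eq2 : DD (fun x y => (psi y ^+ 2 * a y - psi x ^+ 2 * a x) * (a y - a x)) =
    - 2 * \sum_(x <- S) psi x ^+ 2 * a x * (a x - a' x) * m x.
  have := green (fun x => psi x ^+ 2 * a x) a.
  move=> /(_ _) e.
  have e' := e (fun x gx => ltac:(by rewrite psi_bad // expr0n mul0r)).
  have -> : \sum_(x <- S) psi x ^+ 2 * a x * (a x - a' x) * m x =
      \sum_(x <- S) psi x ^+ 2 * a x * (m x * laplacian m w a x).
    apply: eq_bigr => x _; case: (pselect (good x)) => gx.
      by rewrite hA //; ring.
    by rewrite psi_bad // expr0n !mul0r.
  rewrite e'; field; done.
have eq3 : DD (fun x y => 2 * (psi y - psi x) ^+ 2 * (a x ^+ 2 + a y ^+ 2)) =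
    4 * DD (fun x y => a x ^+ 2 * (psi y - psi x) ^+ 2).
  rewrite (DD_ext _ (fun x y => 2 * (a x ^+ 2 * (psi y - psi x) ^+ 2)
                 + 2 * (a y ^+ 2 * (psi y - psi x) ^+ 2))); last by move=> x y; ring.
  rewrite DD_add !DD_scal.
  have -> : DD (fun x y => a y ^+ 2 * (psi y - psi x) ^+ 2) =
            DD (fun x y => a x ^+ 2 * (psi y - psi x) ^+ 2).
    rewrite DD_sym; apply: DD_ext => x y; ring.
  ring.
have b3 := lipDD (4 * rr) (fun x => a x ^+ 2) psi_b (fun x => sqr_ge0 (a x)).
have b4 : - 2 * \sum_(x <- S) psi x ^+ 2 * a x * (a x - a' x) * m x <=
    \sum_(x <- S) psi x ^+ 2 * (a' x ^+ 2 - a x ^+ 2) * m x.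
  rewrite mulr_sumr; apply: ler_sum => x _.
  have h1 : 0 <= psi x ^+ 2 * m x by apply: mulr_ge0; [exact: sqr_ge0|exact: ltW (m_gt0 x)].
  have h2 := sqr_ge0 (a x - a' x).
  have h3 := mulr_ge0 h1 h2.
  have ee : psi x ^+ 2 * (a' x ^+ 2 - a x ^+ 2) * m x - - 2 * (psi x ^+ 2 * a x * (a x - a' x) * m x)
      = psi x ^+ 2 * m x * (a x - a' x) ^+ 2 by ring.
  rewrite -subr_ge0 ee; exact: h3.
rewrite eL; rewrite eq1 eq2 eq3 in ineq.
move: ineq b3 b4.
set A1 := DD _. set A2 := \sum_(x <- S) _. set A3 := \sum_(x <- S) _.
set A4 := \sum_(x <- S) _.
move=> *; lra.
Qed.

Definition E (f : V -> R) := DD (fun x y => phi x * phi y * (f y - f x) ^+ 2).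

Lemma E_ge0 f : 0 <= E f.
Proof.
apply: DD_ge0 => x y; have [a1 _] := cut01 (2 * rr) x; have [b1 _] := cut01 (2 * rr) y.
apply: mulr_ge0; [exact: mulr_ge0|exact: sqr_ge0].
Qed.

Lemma E_le f : E f <= 2 * \sum_(x <- S) psi x ^+ 2 * (Gamma m w f x * m x).
Proof.
rewrite -DDcG; last by move=> x gx; rewrite psi_bad // expr0n.
apply: DD_le => x y _ _; apply: ler_wpM2l; first exact: w_ge0.
apply: ler_wpM2r; [exact: sqr_ge0|exact: phi_psi].
Qed.

Lemma C2 (a a' : V -> R) : (forall x, good x -> a x - a' x = laplacian m w a x) ->
  \sum_(x <- S) phi x ^+ 2 * ((a x - a' x) ^+ 2 * m x) <=
  (E a' - E a) / 2 + 2 * (rr ^- 2 * \sum_(x <- S) psi x ^+ 2 * (Gamma m w a x * m x)).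
Proof.
move=> hA; have r0' := rr_gt0.
have c0 : 0 < rr ^+ 2 by exact: exprn_gt0.
set c := rr ^+ 2.
set L := \sum_(x <- S) phi x ^+ 2 * ((a x - a' x) ^+ 2 * m x).
set v := fun x => a x - a' x.
set X := fun x y => (phi y ^+ 2 * v y - phi x ^+ 2 * v x) * (a y - a x).
have eL : L = - 2^-1 * DD X.
  rewrite -(green (fun x => phi x ^+ 2 * v x) a); last first.
    by move=> x gx; rewrite phi_bad // expr0n mul0r.
  apply: eq_bigr => x _; case: (pselect (good x)) => gx.
    by rewrite -hA // /v; ring.
  by rewrite phi_bad // expr0n !mul0r.
set K := fun x y => (phi y - phi x) ^+ 2 * (phi y ^+ 2 * v y ^+ 2 + phi x ^+ 2 * v x ^+ 2).
have pt : DD (fun x y => (-1) * X x y) <=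
  DD (fun x y => (-2^-1) * (phi x * phi y * (a y - a x) ^+ 2)
       + (2^-1 * (phi x * phi y * (a' y - a' x) ^+ 2)
       + ((c / 2) * K x y + c^-1 * (psi x ^+ 2 * (a y - a x) ^+ 2)))).
  apply: DD_le => x y _ _.
  case: (pselect (0 < w x y)) => hw; last by rewrite w_off // !mul0r.
  apply: ler_wpM2l; first exact: w_ge0.
  have [a1 _] := cut01 (2 * rr) x; have [b1 _] := cut01 (2 * rr) y.
  case: (eqVneq (psi x) 1) => hp.
    rewrite hp expr1n mul1r /X /K.
    have := @pw2 R (phi x) (phi y) (v x) (v y) (a y - a x) (a' y - a' x) c a1 b1 c0.
    have e : v y - v x = a y - a x - (a' y - a' x) by rewrite /v; ring.
    move=> /(_ e) h; lra.
  have [p0 q0] := phi_psi_nb x y hw hp.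
  rewrite /X /K p0 q0.
  have : 0 <= psi x ^+ 2 * (a y - a x) ^+ 2 * c^-1.
    apply: mulr_ge0; [apply: mulr_ge0; exact: sqr_ge0|by rewrite invr_ge0 ltW].
  lra.
rewrite !DD_add !DD_scal in pt.
have eK : DD K = 2 * DD (fun x y => (phi x ^+ 2 * v x ^+ 2) * (cut (2 * rr) y - cut (2 * rr) x) ^+ 2).
  rewrite (DD_ext _ (fun x y => (phi y ^+ 2 * v y ^+ 2) * (phi y - phi x) ^+ 2
        + (phi x ^+ 2 * v x ^+ 2) * (phi y - phi x) ^+ 2)); last first.
    by move=> x y; rewrite /K; ring.
  rewrite DD_add.
  have -> : DD (fun x y => (phi y ^+ 2 * v y ^+ 2) * (phi y - phi x) ^+ 2) =
            DD (fun x y => (phi x ^+ 2 * v x ^+ 2) * (phi y - phi x) ^+ 2).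
    rewrite DD_sym; apply: DD_ext => x y; ring.
  rewrite /phi; ring.
have bK : DD K <= 2 * (c^-1 * L).
  rewrite eK; apply: ler_wpM2l => //.
  have h := lipDD (2 * rr) (fun x => phi x ^+ 2 * v x ^+ 2) phi_b
     (fun x => mulr_ge0 (sqr_ge0 (phi x)) (sqr_ge0 (v x))).
  apply: le_trans h _; rewrite /L -/c.
  rewrite le_eqVlt; apply/orP; left; apply/eqP; congr (_ * _).
  by apply: eq_bigr => x _; rewrite /v mulrA.
have bK' : c / 2 * DD K <= L.
  have h := ler_wpM2l (_ : 0 <= c / 2) bK.
  apply: le_trans (h _) _; first by apply: divr_ge0; [exact: ltW|].
  rewrite le_eqVlt; apply/orP; left; apply/eqP; field.
  by rewrite lt0r_neq0.
rewrite DDcG in pt; last by move=> x gx; rewrite psi_bad // expr0n.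
move: pt bK' eL.
rewrite /E.
set G := \sum_(x <- S) _.
set E1 := DD (fun x y => phi x * phi y * (a y - a x) ^+ 2).
set E2 := DD (fun x y => phi x * phi y * (a' y - a' x) ^+ 2).
set DK := DD K. set DX := DD X.
move=> *; lra.
Qed.

Lemma pre_mono (f : nat -> R) n n' : (forall k, 0 <= f k) -> (n <= n')%N ->
  \sum_(0 <= k < n) f k <= \sum_(0 <= k < n') f k.
Proof.
move=> hf hn; rewrite [X in _ <= X](big_cat_nat (leq0n n) hn) /= lerDl.
by apply: sumr_ge0 => k _.
Qed.

Lemma shift_le (f : nat -> R) a n b : (forall k, 0 <= f k) -> (a + n <= b)%N ->
  \sum_(0 <= i < n) f (a + i)%N <= \sum_(0 <= k < b) f k.
Proof.
move=> hf hb; apply: le_trans _ (pre_mono f (a + n) b hf hb).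
elim: n {hb} => [|n IH].
  by rewrite big_geq // addn0; apply: sumr_ge0 => k _.
rewrite !big_nat_recr //= ?leq0n // addnS big_nat_recr ?leq0n //=.
by rewrite lerD2r.
Qed.

Definition a (k : nat) := fun x => u x (- (k%:Z)).

Lemma Dt_a k x : Dt u x (- (k%:Z)) = a k x - a k.+1 x.
Proof. by rewrite /Dt /a -addn1 PoszD opprD. Qed.

Lemma hA k x : good x -> a k x - a k.+1 x = laplacian m w (a k) x.
Proof.
move=> _; rewrite -Dt_a Ha //; by rewrite oppr_le0.
Qed.

Lemma Gamma_ge0 f x : 0 <= Gamma m w f x.
Proof.
rewrite /Gamma; apply: mulr_ge0; first by rewrite invr_ge0.
apply: fsumr_ge0 => y _; apply: mulr_ge0; last exact: sqr_ge0.
by apply: divr_ge0; [exact: w_ge0|exact: ltW (m_gt0 x)].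
Qed.

Definition U k := \sum_(x <- S) a k x ^+ 2 * m x.
Definition G k := \sum_(x <- S) psi x ^+ 2 * (Gamma m w (a k) x * m x).
Definition H k := \sum_(x <- S) phi x ^+ 2 * ((a k x - a k.+1 x) ^+ 2 * m x).
Definition Psi k := \sum_(x <- S) psi x ^+ 2 * a k x ^+ 2 * m x.

Lemma U_ge0 k : 0 <= U k.
Proof. apply: sumr_ge0 => x _; apply: mulr_ge0; [exact: sqr_ge0|exact: ltW (m_gt0 x)]. Qed.
Lemma G_ge0 k : 0 <= G k.
Proof.
apply: sumr_ge0 => x _; apply: mulr_ge0; first exact: sqr_ge0.
apply: mulr_ge0; [exact: Gamma_ge0|exact: ltW (m_gt0 x)].
Qed.
Lemma H_ge0 k : 0 <= H k.
Proof.
apply: sumr_ge0 => x _; apply: mulr_ge0; first exact: sqr_ge0.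
apply: mulr_ge0; [exact: sqr_ge0|exact: ltW (m_gt0 x)].
Qed.
Lemma Psi_ge0 k : 0 <= Psi k.
Proof.
apply: sumr_ge0 => x _; apply: mulr_ge0; last exact: ltW (m_gt0 x).
apply: mulr_ge0; exact: sqr_ge0.
Qed.
Lemma Psi_le k : Psi k <= U k.
Proof.
apply: ler_sum => x _; have [h1 h2] := cut01 (4 * rr) x.
have h3 : 0 <= a k x ^+ 2 * m x by apply: mulr_ge0; [exact: sqr_ge0|exact: ltW (m_gt0 x)].
have h4 : psi x ^+ 2 <= 1 by rewrite /psi; nra.
rewrite -mulrA; apply: le_trans (ler_wpM2r h3 h4) _; by rewrite mul1r.
Qed.

Lemma Gk k : G k <= Psi k.+1 - Psi k + 4 * (rr ^- 2 * U k).
Proof.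
apply: le_trans (C1 (a k) (a k.+1) (hA k)) _; rewrite /Psi /U -sumrB.
rewrite lerD2r le_eqVlt; apply/orP; left; apply/eqP.
by apply: eq_bigr => x _; ring.
Qed.

Lemma Hk k : H k <= (E (a k.+1) - E (a k)) / 2 + 2 * (rr ^- 2 * G k).
Proof. exact: (C2 (a k) (a k.+1) (hA k)). Qed.

Definition AA K := \sum_(0 <= k < K.+1) G k.
Definition BB K := \sum_(0 <= k < K.+1) H k.

Lemma AA_le K : AA K <= U K.+1 + 4 * (rr ^- 2 * \sum_(0 <= k < K.+1) U k).
Proof.
apply: le_trans (ler_sum_nat (fun k _ => Gk k)) _.
rewrite big_split /= telescope_sumr // -!mulr_sumr.
have := Psi_le K.+1; have := Psi_ge0 0; lra.
Qed.

Lemma BB_le K : BB K <= G K.+1 + 2 * (rr ^- 2 * AA K).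
Proof.
apply: le_trans (ler_sum_nat (fun k _ => Hk k)) _.
rewrite big_split /= -mulr_suml telescope_sumr // -!mulr_sumr.
have := E_le (a K.+1); have := E_ge0 (a 0); rewrite -/(G K.+1) -/(AA K); lra.
Qed.

Lemma AA_mono K K' : (K <= K')%N -> AA K <= AA K'.
Proof. move=> h; apply: pre_mono; [exact: G_ge0|by rewrite ltnS]. Qed.

Definition N := (r ^ 2)%N.
Definition T := \sum_(0 <= k < (81 * N).+1) U k.

Lemma NR : N%:R = rr ^+ 2 :> R. Proof. by rewrite /N natrX. Qed.

Lemma avgA M : (M + N <= 81 * N)%N -> N%:R * AA M <= 5 * T.
Proof.
move=> hM; have r0' := rr_gt0.
have e : N%:R * AA M = \sum_(0 <= i < N) AA M by rewrite sumr_const_nat subn0 mulr_natl.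
rewrite e.
apply: le_trans (_ : \sum_(0 <= i < N) (U (M.+1 + i)%N + 4 * (rr ^- 2 * T)) <= _).
  apply: ler_sum_nat => i /andP [_ hi].
  apply: le_trans (AA_mono M (M + i) (leq_addr i M)) _.
  apply: le_trans (AA_le (M + i)) _.
  rewrite addSn lerD2l; apply: ler_wpM2l => //; apply: ler_wpM2l.
    by rewrite invr_ge0 exprn_ge0 // ltW.
  apply: pre_mono; first exact: U_ge0.
  by rewrite ltnS; apply: leq_trans _ hM; rewrite leq_add2l ltnW.
rewrite big_split /= sumr_const_nat subn0 -[4 * (rr ^- 2 * T) *+ N]mulr_natr NR.
have h1 : \sum_(0 <= i < N) U (M.+1 + i)%N <= T.
  apply: shift_le; first exact: U_ge0.
  by rewrite addSn ltnS.
have -> : 4 * (rr ^- 2 * T) * rr ^+ 2 = 4 * T.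
  field; by rewrite lt0r_neq0.
lra.
Qed.

Lemma avgB : N%:R * BB N <= 3 * AA (2 * N).
Proof.
have r0' := rr_gt0.
have e : N%:R * BB N = \sum_(0 <= i < N) BB N by rewrite sumr_const_nat subn0 mulr_natl.
rewrite e.
apply: le_trans (_ : \sum_(0 <= i < N) (G (N.+1 + i)%N + 2 * (rr ^- 2 * AA (2 * N))) <= _).
  apply: ler_sum_nat => i /andP [_ hi].
  apply: le_trans (_ : BB (N + i) <= _).
    apply: pre_mono; [exact: H_ge0|by rewrite ltnS leq_addr].
  apply: le_trans (BB_le (N + i)) _.
  rewrite addSn lerD2l; apply: ler_wpM2l => //; apply: ler_wpM2l.
    by rewrite invr_ge0 exprn_ge0 // ltW.
  by apply: AA_mono; rewrite mul2n -addnn leq_add2l ltnW.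
rewrite big_split /= sumr_const_nat subn0 -[2 * (rr ^- 2 * AA (2 * N)) *+ N]mulr_natr NR.
have h1 : \sum_(0 <= i < N) G (N.+1 + i)%N <= AA (2 * N).
  apply: shift_le; first exact: G_ge0.
  by rewrite addSn mul2n -addnn.
have -> : 2 * (rr ^- 2 * AA (2 * N)) * rr ^+ 2 = 2 * AA (2 * N).
  field; by rewrite lt0r_neq0.
lra.
Qed.

Lemma ball_le (c F : V -> R) : (forall x, rho x x0 <= rr -> c x = 1) ->
  (forall x, 0 <= c x) -> (forall x, 0 <= F x) ->
  \sum_(x \in ball rho x0 rr) F x <= \sum_(x <- S) c x * F x.
Proof.
move=> h1 h0 hF; have r0' := rr_gt0.
rewrite /S -fsbig_finite; last exact: Hfin.
rewrite (fsbigID (ball rho x0 rr)); last exact: Hfin.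
rewrite setIidr; last by move=> x; rewrite /ball /= natrM -/rr; lra.
rewrite -[X in X <= _]addr0; apply: lerD.
  rewrite le_eqVlt; apply/orP; left; apply/eqP; apply: eq_fsbigr => x.
  by rewrite in_setE => hx; rewrite h1 ?mul1r.
by apply: fsumr_ge0 => x _; exact: mulr_ge0.
Qed.

Lemma main_sec :
  rr ^+ 2 * sumQ m rho x0 r (fun x t => Gamma m w (fun y => u y t) x)
  + rr ^+ 4 * sumQ m rho x0 r (fun x t => Dt u x t ^+ 2)
  <= 20 * sumQ m rho x0 (9 * r) (fun x t => u x t ^+ 2).
Proof.
have r0' := rr_gt0.
have hQ1 : sumQ m rho x0 r (fun x t => Gamma m w (fun y => u y t) x) <= AA N.
  rewrite /sumQ /AA big_mkord; apply: ler_sum => k _.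
  apply: le_trans (ball_le (fun x => psi x ^+ 2)
     (fun x => Gamma m w (a k) x * m x) _ _ _) _.
  - by move=> x hx; rewrite psi1 ?expr1n //; lra.
  - by move=> x; exact: sqr_ge0.
  - by move=> x; apply: mulr_ge0; [exact: Gamma_ge0|exact: ltW (m_gt0 x)].
  - by [].
have hQ2 : sumQ m rho x0 r (fun x t => Dt u x t ^+ 2) <= BB N.
  rewrite /sumQ /BB big_mkord; apply: ler_sum => k _.
  apply: le_trans (ball_le (fun x => phi x ^+ 2)
     (fun x => Dt u x (- k%:Z) ^+ 2 * m x) _ _ _) _.
  - by move=> x hx; rewrite phi1 ?expr1n.
  - by move=> x; exact: sqr_ge0.
  - by move=> x; apply: mulr_ge0; [exact: sqr_ge0|exact: ltW (m_gt0 x)].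
  - rewrite le_eqVlt; apply/orP; left; apply/eqP; apply: eq_bigr => x _.
    by rewrite Dt_a.
have hT : sumQ m rho x0 (9 * r) (fun x t => u x t ^+ 2) = T.
  rewrite /sumQ /T big_mkord.
  have -> : ((9 * r) ^ 2 = 81 * N)%N by rewrite /N expnMn.
  apply: eq_bigr => k _; rewrite fsbig_finite //.
have nn1 : (N + N <= 81 * N)%N by rewrite addnn -mul2n leq_mul2r orbT.
have nn2 : (2 * N + N <= 81 * N)%N.
  by rewrite -[X in (_ + X <= _)%N]mul1n -mulnDl leq_mul2r orbT.
have a1 : rr ^+ 2 * AA N <= 5 * T by rewrite -NR; exact: avgA.
have a2 : rr ^+ 2 * AA (2 * N) <= 5 * T by rewrite -NR; exact: avgA.
have b1 : rr ^+ 2 * BB N <= 3 * AA (2 * N) by rewrite -NR; exact: avgB.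
have p2 : 0 <= rr ^+ 2 by exact: exprn_ge0 (ltW r0').
have p4 : 0 <= rr ^+ 4 by exact: exprn_ge0 (ltW r0').
have q1 := ler_wpM2l p2 hQ1.
have q2 := ler_wpM2l p4 hQ2.
have b2 : rr ^+ 4 * BB N <= 15 * T.
  have -> : rr ^+ 4 * BB N = rr ^+ 2 * (rr ^+ 2 * BB N) by ring.
  apply: le_trans (ler_wpM2l p2 b1) _.
  have -> : rr ^+ 2 * (3 * AA (2 * N)) = 3 * (rr ^+ 2 * AA (2 * N)) by ring.
  lra.
rewrite hT; lra.
Qed.

End Main.

Theorem theorem4p1 (R : realType) :
  exists C : R,
  forall (V : choiceType) (m : V -> R) (w : V -> V -> R) (rho : V -> V -> R)
         (x0 : V) (u : V -> int -> R) (r : nat),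
    weighted_graph m w ->
    pseudometric rho ->
    intrinsic m w rho ->
    (forall (x : V) (s : R), finite_set (ball rho x s)) ->
    has_ubound (jumps w rho) ->
    ancient m w u ->
    jump_size w rho <= r%:R ->
    (r%:R ^+ 2 * sumQ m rho x0 r (fun x t => Gamma m w (fun y => u y t) x)
     + r%:R ^+ 4 * sumQ m rho x0 r (fun x t => Dt u x t ^+ 2)
     <= C * sumQ m rho x0 (9 * r) (fun x t => u x t ^+ 2)).
Proof.
exists 20 => V m w rho x0 u r Hg Hp Hi Hfin Hub Ha Hj.
case: (posnP r) => [r0|r0]; last by apply: main_sec.
subst r; rewrite !expr0n /= !mul0r add0r.
apply: mulr_ge0 => //; apply: sumr_ge0 => k _; apply: fsumr_ge0 => x _.
apply: mulr_ge0; first exact: sqr_ge0.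
by case: Hg => _ [_ [_ [_ [hm _]]]]; exact: ltW (hm x).
Qed.
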